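(* Let $K\subseteq\mathbb{R}^n$ be non-empty and compact. Then every $K$-positivity preserver $T=\sum_{\alpha\in\mathbb{N}_0^n}q_\alpha\partial^\alpha$ with constant coefficients $q_\alpha\in\mathbb{R}$ is of the form $T=c\cdot\mathbb{1}$ for some $c\in[0,\infty)$.
   Context: A linear map $T:\mathbb{R}[x_1,\dots,x_n]\to\mathbb{R}[x_1,\dots,x_n]$ is a $K$-positivity preserver if it maps every polynomial non-negative on $K$ to a polynomial non-negative on $K$. $\mathbb{1}$ denotes the identity map. *)

(* Defs.v *)
From HB Require Import structures.
From mathcomp Require Import all_boot all_order all_algebra.
From mathcomp Require Import mpoly.
From mathcomp Require Import reals.

Set Implicit Arguments.
Unset Strict Implicit.
Unset Printing Implicit Defensive.
Import GRing.Theory Num.Theory.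
Local Open Scope ring_scope.

Definition peval (R : realType) (n : nat) (p : {mpoly R[n]}) (x : 'rV[R]_n) : R :=
  p.@[fun i => x ord0 i].

(* The differential operator with constant coefficients
   T = \sum_{alpha in N_0^n} q_alpha \partial^alpha, applied to p.
   Only multi-indices alpha with |alpha| < msize p contribute
   (otherwise \partial^alpha p = 0), so the sum is finite. *)
Definition const_coeff_dop (R : realType) (n : nat)
    (q : 'X_{1..n} -> R) (p : {mpoly R[n]}) : {mpoly R[n]} :=
  \sum_(a : 'X_{1..n < msize p}) q (val a) *: p^`M[val a].

Definition K_pos_preserver (R : realType) (n : nat) (K : 'rV[R]_n -> Prop)
    (T : {mpoly R[n]} -> {mpoly R[n]}) : Prop :=
  forall p : {mpoly R[n]},
    (forall x, K x -> 0 <= peval p x) -> forall x, K x -> 0 <= peval (T p) x.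

Definition scaled_identity (R : realType) (n : nat) (c : R) :
    {mpoly R[n]} -> {mpoly R[n]} := fun p => c *: p.

(* Main.v *)
Require Import Defs.
From HB Require Import structures.
From mathcomp Require Import all_boot all_order all_algebra.
From mathcomp Require Import mpoly.
From mathcomp Require ssrcomplements.
From mathcomp Require Import ring lra.
From mathcomp Require Import all_classical all_reals all_analysis.
Import Order.TTheory GRing.Theory Num.Theory.
Local Open Scope ring_scope.
Import numFieldNormedType.Exports.

Set Implicit Arguments.
Unset Strict Implicit.
Section Alg.
Variables (R : realType) (n : nat).

Definition tau (x : 'I_n -> R) : n.-tuple {mpoly R[n]} :=
  [tuple ('X_i - (x i)%:MP) | i < n].

Lemma exists_pos (m : 'X_{1..n}) : m != 0%MM -> exists j, (0 < m j)%N.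
Proof.
move=> nz; have : [exists j, (0 < m j)%N].
  apply: contraR nz => /existsPn H; apply/eqP/mnmP => j.
  by rewrite mnm0E; move: (H j); rewrite lt0n negbK => /eqP.
by case/existsP => j hj; exists j.
Qed.

Lemma deriv_tau i j x :
  ('X_j \mPo tau x)^`M(i) = ('X_j^`M(i)) \mPo tau x.
Proof.
rewrite comp_mpolyXU -tnth_nth tnth_mktuple mderivB mderivC subr0.
rewrite mderivX comp_mpolyZ mnm1E.
case: (eqVneq j i) => [->|ne]; last by rewrite !scale0r.
have -> : (U_(i) - U_(i) = 0)%MM by apply/mnmP => l; rewrite !mnmE subnn.
by rewrite mpolyX0 comp_mpoly1.
Qed.

Lemma comp_derivX i x m :
  ('X_[m] \mPo tau x)^`M(i) = ('X_[m]^`M(i)) \mPo tau x.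
Proof.
have [k] := ubnP (mdeg m); elim: k m => // k IH m lt_mk.
case: (eqVneq m 0%MM) => [->|nz].
  by rewrite mpolyX0 comp_mpoly1 -mpolyC1 mderivC comp_mpoly0.
have [j hj] := exists_pos nz.
have le : (U_(j) <= m)%MM.
  apply/mnm_lepP => l; rewrite mnm1E; case: eqP => [<-|] //.
have em := submK le.
have lt' : (mdeg (m - U_(j)) < k)%N.
  move: lt_mk; rewrite -{1}em mdegD mdeg1 addn1 ltnS => //.
rewrite -em mpolyXD [in RHS]mderivM [in RHS]comp_mpolyD ![in RHS]rmorphM /=.
rewrite rmorphM /= mderivM.
by rewrite IH // deriv_tau.
Qed.

Lemma comp_deriv i x P : (P \mPo tau x)^`M(i) = (P^`M(i)) \mPo tau x.
Proof.
elim/mpolyind: P => [|c m p _ _ IH]; first by rewrite comp_mpoly0 !mderiv0 comp_mpoly0.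
by rewrite comp_mpolyD !mderivD comp_mpolyD IH !comp_mpolyZ !mderivZ comp_mpolyZ comp_derivX.
Qed.

Lemma comp_derivm a x P : (P \mPo tau x)^`M[a] = (P^`M[a]) \mPo tau x.
Proof.
rewrite !mderivm_foldr; elim: (flatten _) => //= i s ->; exact: comp_deriv.
Qed.

Lemma meval_tau x v P : (P \mPo tau x).@[v] = P.@[fun i => v i - x i].
Proof.
rewrite comp_mpoly_meval; apply: meval_eq => i.
by rewrite tnth_mktuple mevalB mevalXU mevalC.
Qed.

Lemma meval_zero (P : {mpoly R[n]}) : P.@[fun _ => (0:R)] = P@_0%MM.
Proof.
have h (m : 'X_{1..n}) : \prod_(i < n) (0:R) ^+ (m i) = (m == 0%MM)%:R.
  case: eqP => [->|/eqP nz]; first by rewrite big1 // => i _; rewrite mnm0E expr0.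
  have [j hj] := exists_pos nz.
  by rewrite (bigD1 j) //= expr0n gtn_eqF // mul0r.
rewrite mevalE (eq_bigr (fun m => P@_m * (m == 0%MM)%:R)) => [|m _]; last by rewrite h.
case: (boolP (0%MM \in msupp P)) => h0.
  rewrite (bigD1_seq 0%MM) ?msupp_uniq //= eqxx mulr1 big1 ?addr0 // => m /negbTE ->.
  by rewrite mulr0.
rewrite big1_seq; last first.
  move=> m /andP [_ hm]; case: eqP => [e|]; last by rewrite mulr0.
  by move: h0; rewrite -e hm.
by rewrite memN_msupp_eq0.
Qed.


Definition fct (a : 'X_{1..n}) : nat := \prod_(i < n) (a i)^_(a i).

Lemma fct_gt0 a : (0 < fct a)%N.
Proof. by rewrite /fct prodn_gt0 // => i; rewrite ffactnn fact_gt0. Qed.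

Lemma derivm_eval0 a (P : {mpoly R[n]}) : (P^`M[a])@_0%MM = P@_a *+ fct a.
Proof. by rewrite mcoeff_mderivm addm0. Qed.

Lemma deriv_big a (P : {mpoly R[n]}) : (msize P <= mdeg a)%N -> P^`M[a] = 0.
Proof.
move=> h; apply/mpolyP => m; rewrite mcoeff_mderivm mcoeff0.
rewrite memN_msupp_eq0 ?mul0rn //; apply: msize_mdeg_ge.
by rewrite mdegD (leq_trans h) // leq_addr.
Qed.

Lemma sum_ext (F : 'X_{1..n} -> R) k1 k2 : (k1 <= k2)%N ->
  (forall m, (k1 <= mdeg m)%N -> F m = 0) ->
  \sum_(a : 'X_{1..n < k2}) F (val a) = \sum_(a : 'X_{1..n < k1}) F (val a).
Proof.
move=> le H.
rewrite (bigID (fun a : 'X_{1..n < k2} => (mdeg (val a) < k1)%N)) /=.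
rewrite [X in _ + X]big1 ?addr0; last by move=> a; rewrite -leqNgt => /H.
pose I : subFinType _ := 'X_{1..n < k1}.
pose J : subFinType _ := 'X_{1..n < k2}.
have := @ssrcomplements.big_sub_widen _ _ _ _ _ _ I J predT F.
move=> ->; first by apply: eq_bigl.
by move=> m /leq_trans; apply.
Qed.

Lemma sum_supp (G : 'X_{1..n} -> R) k (P : {mpoly R[n]}) : (msize P <= k)%N ->
  (forall m, P@_m = 0 -> G m = 0) ->
  \sum_(a : 'X_{1..n < k}) G (val a) = \sum_(m <- msupp P) G m.
Proof.
move=> lt_pk HG; pose I : subFinType _ := 'X_{1..n < k}.
rewrite (ssrcomplements.big_mksub I) /=; first last.
  by move=> x /msize_mdeg_lt /leq_trans; apply.
  by rewrite msupp_uniq.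
apply/esym; rewrite big_rmcond //= => i; by move/memN_msupp_eq0 /HG.
Qed.

Lemma L_formula (q : 'X_{1..n} -> R) (x : 'I_n -> R) (P : {mpoly R[n]}) :
  (const_coeff_dop q (P \mPo tau x)).@[x] =
  \sum_(m <- msupp P) q m * (P@_m *+ fct m).
Proof.
set p := P \mPo tau x.
have E a : (p^`M[a]).@[x] = P@_a *+ fct a.
  rewrite comp_derivm meval_tau (@meval_eq _ _ _ (fun _ => 0)) ?meval_zero ?derivm_eval0 //.
  by move=> i; rewrite subrr.
rewrite /const_coeff_dop raddf_sum /=.
rewrite -(@sum_ext (fun a => (q a *: p^`M[a]).@[x]) (msize p) (maxn (msize p) (msize P))).
- rewrite (eq_bigr (fun a => q (val a) * (P@_(val a) *+ fct (val a)))) => [|a _]; last by rewrite mevalZ E.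
  apply: sum_supp; first by rewrite leq_maxr.
  by move=> m ->; rewrite mul0rn mulr0.
- by rewrite leq_maxl.
- by move=> m /deriv_big ->; rewrite scaler0 meval0.
Qed.


Definition W (q : 'X_{1..n} -> R) (P : {mpoly R[n]}) :=
  \sum_(m <- msupp P) q m * (P@_m *+ fct m).

Lemma W_wide q P k : (msize P <= k)%N ->
  W q P = \sum_(a : 'X_{1..n < k}) q (val a) * (P@_(val a) *+ fct (val a)).
Proof.
move=> h; rewrite /W; apply/esym.
apply: (@sum_supp (fun m => q m * (P@_m *+ fct m))) => // m ->.
by rewrite mul0rn mulr0.
Qed.

Lemma WD q P1 P2 : W q (P1 + P2) = W q P1 + W q P2.
Proof.
pose k := maxn (msize P1) (msize P2).
rewrite (@W_wide _ _ k) ?(@W_wide _ P1 k) ?(@W_wide _ P2 k) ?leq_maxl ?leq_maxr //.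
  rewrite -big_split /=; apply: eq_bigr => a _.
  by rewrite mcoeffD mulrnDl mulrDr.
exact: mmeasureD_le.
Qed.

Lemma WZ q c P : W q (c *: P) = c * W q P.
Proof.
rewrite (@W_wide _ _ (msize P)) ?(@W_wide _ P (msize P)) ?msizeZ_le //.
rewrite mulr_sumr; apply: eq_bigr => a _.
by rewrite mcoeffZ -mulrnAr mulrCA.
Qed.

Lemma WN q P : W q (- P) = - W q P.
Proof. by rewrite -scaleN1r WZ mulN1r. Qed.

Lemma WX q m : W q 'X_[m] = q m *+ fct m.
Proof. by rewrite /W msuppX big_seq1 mcoeffX eqxx mulr1n mulrnAr mulr1. Qed.

End Alg.

Unset Implicit Arguments.
Local Open Scope classical_set_scope.

Theorem corollary4p13 (R : realType) (n : nat) (K : set 'rV[R]_n)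
  (q : mpoly.multinom n -> R) :
  K !=set0 -> compact K ->
  K_pos_preserver K (const_coeff_dop q) ->
  exists2 c : R, 0 <= c & forall p : mpoly.mpoly n R, const_coeff_dop q p = scaled_identity c p.
Proof.
move=> K0 cK hT.
have Pos : forall x, K x -> forall P : {mpoly R[n]},
    (forall y, K y -> 0 <= P.@[fun i => y ord0 i - x ord0 i]) -> 0 <= W q P.
  move=> x Kx P HP.
  have H : forall y, K y -> 0 <= peval (P \mPo tau (fun i => x ord0 i)) y.
    by move=> y Ky; rewrite /peval meval_tau; exact: HP.
  by have := hT _ H x Kx; rewrite /peval L_formula.
have eq0 : forall a, 0 <= q a *+ fct a -> q a *+ fct a <= 0 -> q a = 0.
  move=> a h1 h2; have /eqP : q a *+ fct a = 0 by apply/eqP; rewrite eq_le h2 h1.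
  by rewrite mulrn_eq0 eqn0Ngt fct_gt0 /= => /eqP.
have [x0 Kx0] := K0.
have ext j : exists2 xM, K xM & exists2 xm, K xm &
    forall y, K y -> xm ord0 j <= y ord0 j /\ y ord0 j <= xM ord0 j.
  have cf : {within K, continuous (fun y : 'rV[R]_n => y ord0 j)}.
    by apply: continuous_subspaceT => y; exact: coord_continuous.
  have [xM /set_mem KxM hM] := EVT_max_rV K0 cK cf.
  have [xm /set_mem Kxm hm] := EVT_min_rV K0 cK cf.
  by exists xM => //; exists xm => // y Ky; split; [apply: hm|apply: hM]; exact: mem_set.
have hA : forall c j, q (c + c + U_(j))%MM = 0.
  move=> c j; have [xM KxM [xm Kxm hb]] := ext j.
  have eP : 'X_[(c + c + U_(j))%MM] = 'X_[c] * 'X_[c] * 'X_j :> {mpoly R[n]}.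
    by rewrite !mpolyXD.
  apply: eq0.
  - rewrite -WX; apply: (Pos xm Kxm) => y Ky; rewrite eP !mevalM mevalXU.
    have [h1 _] := hb y Ky.
    by rewrite mulr_ge0 ?subr_ge0 // -expr2 sqr_ge0.
  - rewrite -oppr_ge0 -WX -WN; apply: (Pos xM KxM) => y Ky.
    rewrite mevalN eP !mevalM mevalXU -mulrN.
    have [_ h2] := hb y Ky.
    by rewrite mulr_ge0 ?oppr_ge0 ?subr_le0 // -expr2 sqr_ge0.
have hB : forall b, b != 0%MM -> q (b + b)%MM = 0.
  move=> b nz; have [j hj] := exists_pos nz.
  have le : (U_(j) <= b)%MM.
    by apply/mnm_lepP => l; rewrite mnm1E; case: eqP => [<-|].
  set b' := (b - U_(j))%MM.
  have eb : b = (b' + U_(j))%MM by rewrite submK.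
  have [xM KxM [xm Kxm hb]] := ext j.
  apply: eq0.
  - rewrite -WX; apply: (Pos x0 Kx0) => y Ky; rewrite mpolyXD mevalM.
    by rewrite -expr2 sqr_ge0.
  - set D := xM ord0 j - xm ord0 j.
    have eP : - (D *: 'X_[(b' + b' + U_(j))%MM]) - 'X_[(b + b)%MM] =
        'X_[b'] * 'X_[b'] * (- 'X_j) * (D%:MP + 'X_j) :> {mpoly R[n]}.
      rewrite eb !mpolyXD -!mul_mpolyC; ring.
    have : 0 <= W q (- (D *: 'X_[(b' + b' + U_(j))%MM]) - 'X_[(b + b)%MM]).
      apply: (Pos xM KxM) => y Ky.
      rewrite eP !mevalM mevalN mevalD mevalC mevalXU.
      have [h1 h2] := hb y Ky.
      apply: mulr_ge0; last by rewrite /D; lra.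
      apply: mulr_ge0; last by rewrite oppr_ge0 subr_le0.
      by rewrite -expr2 sqr_ge0.
    by rewrite WD !WN WZ !WX hA mul0rn mulr0 oppr0 add0r oppr_ge0.
have hC : forall a, a != 0%MM -> q a = 0.
  move=> a nz; have [j hj] := exists_pos nz.
  have le : (U_(j) <= a)%MM.
    by apply/mnm_lepP => l; rewrite mnm1E; case: eqP => [<-|].
  set be := (a - U_(j))%MM.
  have ea : a = (be + U_(j))%MM by rewrite submK.
  case: (eqVneq be 0%MM) => [be0|benz].
    by have := hA 0%MM j; rewrite !add0m ea be0 add0m.
  have jnz : (U_(j) != 0)%MM.
    by apply/eqP => /mnmP /(_ j); rewrite mnm1E mnm0E eqxx.
  have key t : 0 <= (2 * t) * (q a *+ fct a).
    have e : ('X_j + t *: 'X_[be]) ^+ 2 = 'X_[(U_(j) + U_(j))%MM] + (2 * t) *: 'X_[a]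
        + (t ^+ 2) *: 'X_[(be + be)%MM] :> {mpoly R[n]}.
      rewrite ea !mpolyXD -!mul_mpolyC rmorphM rmorphXn /=; ring.
    have : 0 <= W q (('X_j + t *: 'X_[be]) ^+ 2).
      by apply: (Pos x0 Kx0) => y _; rewrite expr2 mevalM -expr2 sqr_ge0.
    by rewrite e !WD !WZ !WX hB // hB // !mul0rn mulr0 add0r addr0.
  have k1 := key 1; have k2 := key (-1).
  by apply: eq0; lra.
have hq0 : 0 <= q 0%MM.
  have := Pos x0 Kx0 'X_[0%MM]; rewrite WX mpolyX0 pmulrn_lge0 ?fct_gt0 //.
  by apply => y _; rewrite meval1 ler01.
exists (q 0%MM) => // p; rewrite /const_coeff_dop /scaled_identity.
case: (eqVneq p 0) => [->|nzp].
  by rewrite big1 ?scaler0 // => a _; rewrite raddf0 scaler0.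
have h0 : (mdeg (0%MM : 'X_{1..n}) < msize p)%N.
  by rewrite mdeg0 lt0n mmeasure_poly_eq0.
rewrite (bigD1 (Sub 0%MM h0)) //= big1 ?addr0 ?mderivm0m // => a ne.
rewrite hC ?scale0r //; apply: contra ne => /eqP e; apply/eqP/val_inj => /=.
Qed.
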